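(* Let $Q$ be a quiver without oriented cycles, $\mathbf D=k\tilde Q/\mathcal I$, $i$ a sink of $Q$, and $M$ a $\Delta$-filtered $\mathbf D$-module with $d_i=(\underline{\dim}_\Delta M)_i>0$. Then $M$ has a unique quotient module isomorphic to $\Delta(i)^{d_i}$ (i.e. a unique submodule $Y$ with $M/Y\cong\Delta(i)^{d_i}$), and this submodule $Y$ is $\Delta$-filtered.
   Context: $k$ is an algebraically closed field. $\tilde Q$ is the double of $Q$ (arrows $\alpha\in Q_1$ and $\alpha^*:t(\alpha)\to s(\alpha)$), paths composed right to left; $\mathcal I\subseteq k\tilde Q$ is generated by $\alpha^*\alpha-\sum_{\gamma\in Q_1,t(\gamma)=s(\alpha)}\gamma\gamma^*$ ($\alpha\in Q_1$) and $\beta^*\alpha$ ($\alpha\ne\beta\in Q_1$, $t(\alpha)=t(\beta)$). $\Delta(i)$ is the indecomposable projective $kQ$-module with top $L(i)$, a $\mathbf D$-module via $\mathbf D\to kQ$ (killing the $\alpha^*$). $\Delta$-filtered: has a filtration by submodules with successive quotients among the $\Delta(j)$ (equivalently, projective as a $kQ$-module). $\underline{\dim}_\Delta(M)_i$ is the multiplicity of $\Delta(i)$ in such a filtration. A sink is a vertex at which no arrow of $Q$ starts. *)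

(* Defs.v *)
From HB Require Import structures.
From mathcomp Require Import all_boot all_order all_algebra.
Set Implicit Arguments. Unset Strict Implicit. Unset Printing Implicit Defensive.
Import GRing.Theory.
Local Open Scope ring_scope.

(* A path is encoded as the list of its arrows in the order of traversal
   [:: a1; ...; am] (as an element of kQ it is am ... a1, composing right to left). *)
Section Quiver.
Variables (V Ar : finType) (s t : Ar -> V).

Definition is_path (j : V) (p : seq Ar) : bool :=
  if p is a :: p' then (s a == j) && path (fun a b => t a == s b) a p' else true.

Definition pend (j : V) (p : seq Ar) : V := last j (map t p).

Definition acyclic : Prop :=
  forall (v : V) (p : seq Ar), p != [::] -> is_path v p -> pend v p != v.

Fixpoint allseqs (n : nat) : seq (seq Ar) :=
  if n is n'.+1 then [::] :: [seq a :: p | a <- enum Ar, p <- allseqs n']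
  else [:: [::]].

(* all paths starting at j; for an acyclic quiver every path has length < #|V|,
   so this is the full (finite) list of paths starting at j. *)
Definition paths_from (j : V) : seq (seq Ar) :=
  undup [seq p <- allseqs #|V| | is_path j p].

(* Finite-dimensional modules over k(double Q), given as k^dim with the action of
   the idempotents e_v, the arrows alpha and the arrows alpha^*.
   Convention: vectors are row vectors, an element x of the module is acted on by
   a generator g via x |-> x *m (matrix of g). *)
Record dmod (k : fieldType) := DMod {
  mdim : nat;
  mE : V -> 'M[k]_mdim;
  mA : Ar -> 'M[k]_mdim;
  mAs : Ar -> 'M[k]_mdim
}.

Variable k : fieldType.

Definition is_dmod (M : dmod k) : Prop :=
  [/\ forall v, mE M v *m mE M v = mE M v,
      forall v w, v != w -> mE M v *m mE M w = 0
    & \sum_(v : V) mE M v = 1%:M] /\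
  [/\ forall a, mA M a = mE M (s a) *m mA M a *m mE M (t a),
      forall a, mAs M a = mE M (t a) *m mAs M a *m mE M (s a),
      (* alpha^* alpha = sum_{gamma : t gamma = s alpha} gamma gamma^* *)
      forall a, mA M a *m mAs M a = \sum_(g : Ar | t g == s a) mAs M g *m mA M g
    & (* beta^* alpha = 0 for alpha <> beta with t alpha = t beta *)
      forall a b, a != b -> t a = t b -> mA M a *m mAs M b = 0].

(* The standard module Delta(j) = kQ e_j (indecomposable projective kQ-module with
   top L(j)), viewed as a D-module with all alpha^* acting as 0.
   Basis: the paths starting at j; e_v keeps paths ending at v; alpha sends a path
   p to alpha p (appending alpha to the traversal). *)
Definition Delta (j : V) : dmod k :=
  let ps := paths_from j in
  @DMod k (size ps)
    (fun v => \matrix_(p, q) ((p == q) && (pend j (nth [::] ps p) == v))%:R)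
    (fun a => \matrix_(p, q) (nth [::] ps q == rcons (nth [::] ps p) a)%:R)
    (fun a => 0).

Definition dpow (M : dmod k) (d : nat) : dmod k :=
  @DMod k (\sum_(l < d) mdim M)
    (fun v => @mxdiag k d (fun _ => mdim M) (fun _ => mE M v))
    (fun a => @mxdiag k d (fun _ => mdim M) (fun _ => mA M a))
    (fun a => @mxdiag k d (fun _ => mdim M) (fun _ => mAs M a)).

#[local] Unset Implicit Arguments.
Definition submod (M : dmod k) (U : 'M[k]_(mdim M)) : Prop :=
  [/\ forall v, (U *m mE M v <= U)%MS,
      forall a, (U *m mA M a <= U)%MS
    & forall a, (U *m mAs M a <= U)%MS].

(* For submodules W <= U of M: the subquotient U/W is isomorphic to N, witnessed by
   a linear map G defined on U which is a module homomorphism U -> N, surjective,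
   with kernel (in U) equal to W. *)
Definition subquot_iso (M : dmod k) (U W : 'M[k]_(mdim M)) (N : dmod k) : Prop :=
  exists G : 'M[k]_(mdim M, mdim N),
    [/\ forall v, U *m mE M v *m G = U *m G *m mE N v,
        forall a, U *m mA M a *m G = U *m G *m mA N a,
        forall a, U *m mAs M a *m G = U *m G *m mAs N a,
        row_full (U *m G)
      & (U :&: kermx G == W)%MS].

(* Delta-filtration of the submodule U of M with successive quotients
   Delta(js_0), Delta(js_1), ...:  0 = F_0 <= F_1 <= ... <= F_r = U,
   F_l submodules, F_{l+1}/F_l ~ Delta(js_l). *)
Definition dfilt (M : dmod k) (U : 'M[k]_(mdim M)) (js : seq V) : Prop :=
  exists F : nat -> 'M[k]_(mdim M),
    [/\ F 0%N = 0, (F (size js) == U)%MS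
      & forall (l : nat) (j : V), onth js l = Some j ->
          [/\ submod M (F l.+1), (F l <= F l.+1)%MS
            & subquot_iso M (F l.+1) (F l) (Delta j)]].

Definition Delta_filtered (M : dmod k) (U : 'M[k]_(mdim M)) : Prop :=
  exists js : seq V, dfilt M U js.

End Quiver.

Arguments submod {V Ar k} M U.
Arguments subquot_iso {V Ar k} M U W N.
Arguments dfilt {V Ar} s t {k} M U js.
Arguments Delta_filtered {V Ar} s t {k} M U.

(* Main.v *)
Require Import Defs.
From HB Require Import structures.
From mathcomp Require Import all_boot all_order all_algebra.
From Stdlib Require Import Lia.
Set Implicit Arguments. Unset Strict Implicit. Unset Printing Implicit Defensive.
Import GRing.Theory.
Ltac nlia := repeat (match goal with H : is_true (leq _ _) |- _ => apply (elimT leP) in H end);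
  try (match goal with |- is_true (leq _ _) => apply/leP end); 
  repeat (match goal with H : context [addn] |- _ => rewrite -plusE in H
           | H : context [subn] |- _ => rewrite -minusE in H
           | H : context [muln] |- _ => rewrite -multE in H end);
  rewrite -?plusE -?minusE -?multE; lia.
Section Paths.
Variables (V Ar : finType) (s t : Ar -> V).
Hypothesis HQ : acyclic s t.

Lemma is_path_cons j a p : is_path s t j (a :: p) = (s a == j) && is_path s t (t a) p.
Proof. by case: p => [|b p] /=; rewrite ?andbT // (eq_sym (t a)). Qed.

Lemma is_path_rcons j q a :
  is_path s t j (rcons q a) = is_path s t j q && (pend t j q == s a).
Proof.
case: q => [|b q] /=; first by rewrite andbT /pend /= eq_sym.
by rewrite (@rcons_path _ (fun a b => t a == s b)) /pend /= last_map andbA.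
Qed.

Lemma pend_rcons j q a : pend t j (rcons q a) = t a.
Proof. by rewrite /pend map_rcons last_rcons. Qed.

Lemma is_path_cat j p1 p2 : is_path s t j (p1 ++ p2) -> is_path s t j p1.
Proof. by case: p1 => [|b p1] //=; rewrite cat_path => /andP[-> /andP[]]. Qed.

Lemma is_path_take j p m : is_path s t j p -> is_path s t j (take m p).
Proof. by rewrite -{1}(cat_take_drop m p); apply: is_path_cat. Qed.

Lemma vert_mem w p v : v \in w :: map t p -> exists m, pend t w (take m p) = v.
Proof.
elim: p w => [|b p IH] w /=.
  by rewrite inE => /eqP ->; exists 0%N.
rewrite inE => /orP[/eqP ->|]; first by exists 0%N.
by move=> /IH [m Hm]; exists m.+1.
Qed.

Lemma path_uniq j p : is_path s t j p -> uniq (j :: map t p).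
Proof.
elim: p j => [|a p IH] j //.
rewrite is_path_cons => /andP[/eqP Hs Hp].
have /= -> := IH _ Hp; rewrite andbT.
apply/negP => /vert_mem [m Hm].
have := HQ (p := a :: take m p) (v := j) isT.
rewrite is_path_cons Hs eqxx is_path_take //=.
by move/(_ isT); rewrite -Hm /pend /= eqxx.
Qed.

Lemma path_size j p : is_path s t j p -> (size p < #|V|)%N.
Proof.
move=> /path_uniq /card_uniqP Hc.
have := max_card (mem (j :: map t p)); by rewrite Hc /= size_map.
Qed.

Lemma allseqsP n p : (size p <= n)%N -> p \in allseqs Ar n.
Proof.
elim: n p => [|n IH] [|a p] //= Hs; rewrite ?inE ?eqxx //.
apply/orP; right.
by apply: (allpairs_f (fun a p => a :: p)); rewrite ?mem_enum ?IH.
Qed.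

Lemma paths_fromP j p : (p \in paths_from s t j) = is_path s t j p.
Proof.
rewrite /paths_from mem_undup mem_filter.
case H: (is_path s t j p) => //=.
by apply: allseqsP; apply: ltnW; apply: path_size H.
Qed.

Lemma paths_from_uniq j : uniq (paths_from s t j).
Proof. exact: undup_uniq. Qed.

Lemma nil_in_paths j : [::] \in paths_from s t j.
Proof. by rewrite paths_fromP. Qed.

End Paths.

Local Open Scope ring_scope.
Lemma diag_rank (k : fieldType) m (b : 'I_m -> bool) :
  \rank (\matrix_(p, q) ((p == q) && b p)%:R : 'M[k]_m) = #|[pred p | b p]|.
Proof.
have Hd := @mxdirect_delta k _ b m id (in2W (@inj_id _)).
set D := \matrix_(p, q) _.
have Hrow p : row p D = if b p then delta_mx 0 p else 0.
  apply/rowP => q; rewrite !mxE; case: (b p); rewrite ?mxE ?andbT ?andbF //=.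
  by rewrite eq_sym.
have -> : (D :=: \sum_(p | b p) <<delta_mx 0 p : 'rV[k]_m>>)%MS.
  apply/eqmxP/andP; split.
    apply/row_subP => p; rewrite Hrow; case Hb: (b p); last exact: sub0mx.
    by rewrite (sumsmx_sup p) // genmxE.
  apply/sumsmx_subP => p Hb; rewrite genmxE -[delta_mx 0 p]/(if true then delta_mx 0 p else 0).
  by rewrite -Hb -Hrow row_sub.
move/mxdirectP: Hd => /= ->.
rewrite -sum1_card; apply: eq_bigr => p _.
by rewrite mxrank_gen mxrank_delta.
Qed.

Section DeltaS.
Variables (k : fieldType) (V Ar : finType) (s t : Ar -> V).
Hypothesis HQ : acyclic s t.

Lemma rank_DE j v : \rank (mE (Delta s t k j) v) =
   #|[pred p : 'I_(size (paths_from s t j)) | pend t j (nth [::] (paths_from s t j) p) == v]|.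
Proof. by rewrite /= diag_rank. Qed.

Lemma D1 j i : ((j == i) + \sum_(a | t a == i) \rank (mE (Delta s t k j) (s a))
   <= \rank (mE (Delta s t k j) i))%N.
Proof.
rewrite !rank_DE.
set ps := paths_from s t j; set m := size ps.
set nt := fun p : 'I_m => nth [::] ps p.
pose S := [set x : Ar * 'I_m | (t x.1 == i) && (pend t j (nt x.2) == s x.1)].
have HS : (\sum_(a | t a == i) #|[pred q : 'I_m | pend t j (nth [::] ps q) == s a]| = #|S|)%N.
  rewrite -sum1_card.
  rewrite (eq_bigr (fun a => \sum_(q | pend t j (nt q) == s a) 1)%N); last first.
    by move=> a _; rewrite -sum1_card.
  rewrite pair_big_dep; apply: eq_bigl => x; by rewrite inE.
rewrite (eq_bigr _ (fun a _ => rank_DE j (s a))) HS.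
pose f x : 'I_m := insubd x.2 (index (rcons (nt x.2) x.1) ps).
have Hf x : x \in S -> nt (f x) = rcons (nt x.2) x.1.
  rewrite inE => /andP[_ Hp].
  have Hin : rcons (nt x.2) x.1 \in ps.
    by rewrite paths_fromP // is_path_rcons Hp andbT -paths_fromP // mem_nth.
  by rewrite /nt val_insubd index_mem Hin nth_index.
have Hinj : {in S &, injective f}.
  move=> x y Hx Hy Hxy; have := Hf x Hx; rewrite Hxy Hf // => /rcons_inj [H2 H1].
  have : (nt x.2 == nt y.2) by rewrite H2.
  rewrite /nt nth_uniq ?paths_from_uniq // => /eqP /val_inj.
  by case: x y {Hx Hy Hxy H2} H1 => [x1 x2] [y1 y2] /= -> ->.
have Hsub : f @: S \subset [set p | pend t j (nt p) == i].
  apply/subsetP => p /imsetP [x Hx ->]; rewrite inE Hf // pend_rcons.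
  by move: Hx; rewrite inE => /andP[].
have -> : #|[pred p : 'I_m | pend t j (nth [::] ps p) == i]| = #|[set p | pend t j (nt p) == i]|.
  by rewrite cardsE.
case: eqP => [Hji|_]; last by rewrite add0n -(card_in_imset Hinj) subset_leq_card.
have H0 : (index [::] ps < m)%N by rewrite index_mem nil_in_paths.
pose p0 := Ordinal H0.
have Hp0 : nt p0 = [::] by rewrite /nt /= nth_index // nil_in_paths.
rewrite -(card_in_imset Hinj).
have -> : (true + #|f @: S| = #|p0 |: f @: S|)%N.
  suff H : p0 \notin f @: S by rewrite cardsU1 H.
  apply/negP => /imsetP [x Hx Hpx]; have := Hf x Hx; rewrite -Hpx Hp0.
  by case: (nt x.2).
apply: subset_leq_card; apply/subsetP => p; rewrite !inE => /orP[/eqP ->|Hp].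
  by rewrite Hp0 /pend /= Hji.
by move/subsetP: Hsub => /(_ p Hp); rewrite inE.
Qed.
End DeltaS.

Section DeltaS2.
Variables (k : fieldType) (V Ar : finType) (s t : Ar -> V).
Hypothesis HQ : acyclic s t.

Lemma D2 j i r (Z : 'M[k]_(r, mdim (Delta s t k j))) : j != i ->
  (forall v, v != i -> (mE (Delta s t k j) v <= Z)%MS) ->
  (forall a, (mA (Delta s t k j) a <= Z)%MS) -> row_full Z.
Proof.
move=> Hji HE HA; rewrite -sub1mx; apply/row_subP => p; rewrite row1.
set ps := paths_from s t j in p *.
case Hv: (pend t j (nth [::] ps p) == i); last first.
  apply: submx_trans (HE _ (negbT Hv)).
  have -> : delta_mx 0 p = row p (mE (Delta s t k j) (pend t j (nth [::] ps p))).
    by apply/rowP => q; rewrite !mxE /= eqxx andbT eq_sym.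
  exact: row_sub.
have Hin : nth [::] ps p \in ps by rewrite mem_nth.
move: Hv Hin; case/lastP E: (nth [::] ps p) => [|q a].
  by rewrite /pend /= => /eqP Hj; rewrite Hj eqxx in Hji.
rewrite pend_rcons => /eqP Hta.
rewrite paths_fromP // is_path_rcons => /andP[Hq _].
have Hqi : (index q ps < size ps)%N by rewrite index_mem paths_fromP.
apply: submx_trans (HA a).
have -> : delta_mx 0 p = row (Ordinal Hqi) (mA (Delta s t k j) a).
  apply/rowP => r'; rewrite !mxE /= nth_index ?paths_fromP // -E.
  by rewrite nth_uniq ?paths_from_uniq // eq_sym.
exact: row_sub.
Qed.

Lemma paths_sink i : (forall a, s a != i) -> paths_from s t i = [:: [::]].
Proof.
move=> Hs; rewrite /paths_from.
have : (0 < #|V|)%N by apply/card_gt0P; exists i.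
case: #|V| => [//|n] _ /=.
rewrite (@eq_in_filter _ _ pred0); first by rewrite filter_pred0.
move=> p /allpairsP [[a q] [_ _ ->]] /=.
by rewrite (negbTE (Hs a)).
Qed.

End DeltaS2.

Section DeltaI.
Variables (k : fieldType) (V Ar : finType) (s t : Ar -> V) (i : V).
Hypothesis Hs : forall a, s a != i.

Lemma Di_nth x : nth [::] (paths_from s t i) x = [::].
Proof. by rewrite paths_sink //; case: x => [|[]]. Qed.

Lemma Di_ord (p q : 'I_(size (paths_from s t i))) : p = q.
Proof.
have Hsz : size (paths_from s t i) = 1%N by rewrite paths_sink.
apply/val_inj; case: p => p' Hp; case: q => q' Hq /=; move: Hp Hq; rewrite Hsz.
by case: p' => [|?] //; case: q' => [|?].
Qed.

Lemma Di_E v : mE (Delta s t k i) v = (v == i)%:R%:M.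
Proof.
apply/matrixP => p q; rewrite !mxE Di_nth (Di_ord p q) eqxx /pend /=.
by rewrite eq_sym mulr1n.
Qed.

Lemma Di_A a : mA (Delta s t k i) a = 0.
Proof. by apply/matrixP => p q; rewrite !mxE !Di_nth; case: eqP => // /(congr1 size); rewrite size_rcons. Qed.

Lemma Di_dim : mdim (Delta s t k i) = 1%N.
Proof. by rewrite /= paths_sink. Qed.

Lemma dpow_E d v : mE (dpow (Delta s t k i) d) v = (v == i)%:R%:M.
Proof. by rewrite -[mE (dpow _ _) v]/(\mxdiag_(l < d) mE (Delta s t k i) v) Di_E mxdiagZ. Qed.

Lemma dpow_A d a : mA (dpow (Delta s t k i) d) a = 0.
Proof. by rewrite -[mA (dpow _ _) a]/(\mxdiag_(l < d) mA (Delta s t k i) a) Di_A mxdiag0. Qed.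

Lemma dpow_As d a : mAs (dpow (Delta s t k i) d) a = 0.
Proof. by rewrite /= mxdiag0. Qed.

Lemma dpow_dim d : mdim (dpow (Delta s t k i) d) = d.
Proof. by rewrite -[mdim (dpow _ _)]/(\sum_(l < d) mdim (Delta s t k i))%N Di_dim sum1_card card_ord. Qed.
End DeltaI.

Section Mod.
Variables (k : fieldType) (V Ar : finType) (s t : Ar -> V) (i : V).
Hypothesis HQ : acyclic s t.
Hypothesis Hsink : forall a, s a != i.
Variable M : dmod V Ar k.
Hypothesis HM : is_dmod s t M.
Local Notation n := (mdim M).
Local Notation E := (mE M).
Local Notation A := (mA M).
Local Notation As := (mAs M).

Lemma HEid v : E v *m E v = E v.
Proof. by case: HM => [[H _ _] _]. Qed.
Lemma HEorth v w : v != w -> E v *m E w = 0.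
Proof. by case: HM => [[_ H _] _]; apply: H. Qed.
Lemma HEsum : \sum_v E v = 1%:M.
Proof. by case: HM => [[_ _ H] _]. Qed.
Lemma HA a : A a = E (s a) *m A a *m E (t a).
Proof. by case: HM => [_ [H _ _ _]]. Qed.
Lemma HAs a : As a = E (t a) *m As a *m E (s a).
Proof. by case: HM => [_ [_ H _ _]]. Qed.

Lemma subE_id m (X : 'M_(m, n)) v : (X <= E v)%MS -> X *m E v = X.
Proof. by case/submxP => D ->; rewrite -mulmxA HEid. Qed.

Definition R := (\sum_(a | t a == i) A a)%MS.
Definition Y := (R + \sum_(v | v != i) E v)%MS.

Lemma A_sub_Et a : (A a <= E (t a))%MS.
Proof. by rewrite {1}HA submxMl. Qed.
Lemma As_sub_Es a : (As a <= E (s a))%MS.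
Proof. by rewrite {1}HAs submxMl. Qed.

Lemma E_sub_Y v : v != i -> (E v <= Y)%MS.
Proof. by move=> Hv; apply: submx_trans (addsmxSr R _); apply: (sumsmx_sup v). Qed.

Lemma A_sub_Y a : (A a <= Y)%MS.
Proof.
case Ht: (t a == i).
  by apply: submx_trans (addsmxSl _ _); apply: (sumsmx_sup a).
by apply: submx_trans (A_sub_Et a) (E_sub_Y (negbT Ht)).
Qed.

Lemma As_sub_Y a : (As a <= Y)%MS.
Proof. exact: submx_trans (As_sub_Es a) (E_sub_Y (Hsink a)). Qed.

Lemma Y_sub_gen m (Z : 'M_(m, n)) : (forall v, v != i -> (E v <= Z)%MS) ->
  (forall a, (A a <= Z)%MS) -> (Y <= Z)%MS.
Proof.
move=> HE HA'; rewrite addsmx_sub; apply/andP; split; apply/sumsmx_subP => x Hx.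
  exact: HA'.
exact: HE.
Qed.

Lemma Y_Ei_sub : (Y *m E i <= R)%MS.
Proof.
rewrite addsmxMr addsmx_sub sumsmxMr sumsmxMr; apply/andP; split; apply/sumsmx_subP => x Hx.
  by rewrite -(eqP Hx) subE_id ?A_sub_Et //; apply: (sumsmx_sup x).
by rewrite HEorth // sub0mx.
Qed.

Lemma submod_Y : submod M Y.
Proof.
split => [v|a|a].
- case Hv: (v == i); last by apply: submx_trans (submxMl _ _) (E_sub_Y (negbT Hv)).
  rewrite (eqP Hv); apply: submx_trans Y_Ei_sub _; exact: addsmxSl.
- exact: submx_trans (submxMl _ _) (A_sub_Y a).
- exact: submx_trans (submxMl _ _) (As_sub_Y a).
Qed.

Lemma cap_Ei_Y : (E i :&: Y <= R)%MS.
Proof.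
rewrite -[X in (X <= _)%MS](@subE_id _ _ i) ?capmxSl //.
by apply: submx_trans (submxMr _ (capmxSr _ _)) Y_Ei_sub.
Qed.

Definition HG (U W : 'M_n) (N : dmod V Ar k) (G : 'M_(n, mdim N)) :=
  [/\ forall v, U *m E v *m G = U *m G *m mE N v,
      forall a, U *m A a *m G = U *m G *m mA N a,
      forall a, U *m As a *m G = U *m G *m mAs N a,
      row_full (U *m G)
    & (U :&: kermx G == W)%MS].
Arguments HG U W N G : clear implicits.

Lemma HG_facts (U W : 'M_n) (N : dmod V Ar k) (G : 'M_(n, mdim N)) : HG U W N G ->
  [/\ (W <= U)%MS, (W <= kermx G)%MS & (U :&: kermx G <= W)%MS].
Proof.
case=> _ _ _ _ /andP[H1 H2]; split => //.
  exact: submx_trans H2 (capmxSl _ _).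
exact: submx_trans H2 (capmxSr _ _).
Qed.

Lemma step_rank (U W : 'M_n) (N : dmod V Ar k) (G : 'M_(n, mdim N)) : HG U W N G -> \rank U = (\rank W + mdim N)%N.
Proof.
move=> HG'; have := mxrank_mul_ker U G; case: HG' => _ _ _ /eqP -> /eqmx_rank ->.
by rewrite addnC.
Qed.

Lemma restr_hom (U U' B : 'M[k]_n) p (G : 'M[k]_(n, p)) (C : 'M[k]_p) : (U' <= U)%MS ->
  U *m B *m G = U *m G *m C -> U' *m B *m G = U' *m G *m C.
Proof.
by move=> H HU; rewrite -(mulmxKpV H) -!mulmxA !(mulmxA U) HU.
Qed.

Lemma submod0 : submod M 0.
Proof. by split => *; rewrite mul0mx sub0mx. Qed.

Lemma submod_cap (U U' : 'M_n) : submod M U -> submod M U' -> submod M (U :&: U')%MS.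
Proof.
move=> [H1 H2 H3] [H1' H2' H3']; split => [v|a|a]; rewrite sub_capmx; apply/andP; split.
- exact: submx_trans (submxMr _ (capmxSl _ _)) (H1 v).
- exact: submx_trans (submxMr _ (capmxSr _ _)) (H1' v).
- exact: submx_trans (submxMr _ (capmxSl _ _)) (H2 a).
- exact: submx_trans (submxMr _ (capmxSr _ _)) (H2' a).
- exact: submx_trans (submxMr _ (capmxSl _ _)) (H3 a).
- exact: submx_trans (submxMr _ (capmxSr _ _)) (H3' a).
Qed.

Lemma rank_E_step (U W : 'M_n) (N : dmod V Ar k) (G : 'M_(n, mdim N)) v : submod M U -> submod M W -> HG U W N G ->
  \rank (U *m E v) = (\rank (W *m E v) + \rank (mE N v))%N.
Proof.
move=> [HU _ _] [HW _ _] HG'; have [HWU HWK HUK] := HG_facts HG'.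
case: HG' => HE _ _ Hfull _.
have := mxrank_mul_ker (U *m E v) G; rewrite HE (eqmxMfull _ Hfull).
suff /eqmx_rank -> : (U *m E v :&: kermx G == W *m E v)%MS by rewrite addnC.
apply/andP; split.
  rewrite -[X in (X <= _)%MS](@subE_id _ _ v); last first.
    exact: submx_trans (capmxSl _ _) (submxMl _ _).
  apply: submxMr; apply: submx_trans HUK.
  by apply: capmxS => //; apply: HU.
rewrite sub_capmx submxMr //=.
exact: submx_trans (HW v) HWK.
Qed.

Lemma cap_step (U W : 'M_n) (N : dmod V Ar k) (G : 'M_(n, mdim N)) : HG U W N G -> ((U :&: Y) :&: kermx G == W :&: Y)%MS.
Proof.
move=> HG'; have [HWU HWK HUK] := HG_facts HG'.
apply/andP; split; rewrite sub_capmx; apply/andP; split.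
- apply: submx_trans HUK; exact: capmxS (capmxSl _ _) (submx_refl _).
- exact: submx_trans (capmxSl _ _) (capmxSr _ _).
- exact: capmxS HWU (submx_refl _).
- exact: submx_trans (capmxSl _ _) HWK.
Qed.

Lemma restr_HG (U W : 'M_n) j (G : 'M_(n, mdim (Delta s t k j))) : j != i -> submod M U -> HG U W (Delta s t k j) G ->
  HG (U :&: Y)%MS (W :&: Y)%MS (Delta s t k j) G.
Proof.
move=> Hj HU HG'; have Hc := cap_step HG'.
case: (HG') => HE HA' HAs' Hfull _.
have HUY : (U :&: Y <= U)%MS by exact: capmxSl.
split => //.
- by move=> v; apply: restr_hom HUY (HE v).
- by move=> a; apply: restr_hom HUY (HA' a).
- by move=> a; apply: restr_hom HUY (HAs' a).
apply: (D2 HQ Hj) => [v Hv|a].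
  apply: submx_trans (_ : mE (Delta s t k j) v <= U *m G *m mE (Delta s t k j) v)%MS _.
    by rewrite (eqmxMfull _ Hfull).
  rewrite -HE; apply: submxMr; rewrite sub_capmx; apply/andP; split.
    by case: HU => H _ _; apply: H.
  exact: submx_trans (submxMl _ _) (E_sub_Y Hv).
apply: submx_trans (_ : mA (Delta s t k j) a <= U *m G *m mA (Delta s t k j) a)%MS _.
  by rewrite (eqmxMfull _ Hfull).
rewrite -HA'; apply: submxMr; rewrite sub_capmx; apply/andP; split.
  by case: HU => _ H _; apply: H.
exact: submx_trans (submxMl _ _) (A_sub_Y a).
Qed.

Lemma rank_sum_le (I : finType) (P : pred I) (B : I -> 'M[k]_n) :
  (\rank (\sum_(x | P x) B x)%MS <= \sum_(x | P x) \rank (B x))%N.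
Proof.
apply: (big_ind2 (fun (X : 'M_n) m => \rank X <= m)%N) => //.
  by rewrite mxrank0.
move=> X1 m1 X2 m2 H1 H2; apply: leq_trans (mxrank_adds_leqif X1 X2).1 _.
exact: leq_add.
Qed.

Lemma count_sum (js : seq V) : count_mem i js = (\sum_(x <- js) (x == i))%N.
Proof. by elim: js => [|x js IH]; rewrite ?big_nil ?big_cons //= IH. Qed.

Section Filt.
Variables (js : seq V) (F : nat -> 'M[k]_n).
Hypothesis HF0 : F 0%N = 0.
Hypothesis HFr : (F (size js) == 1%:M)%MS.
Hypothesis Hst : forall (l : nat) (j : V), onth js l = Some j ->
          [/\ submod M (F l.+1), (F l <= F l.+1)%MS
            & subquot_iso M (F l.+1) (F l) (Delta s t k j)].

Local Notation r := (size js).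
Local Notation jl l := (nth i js l).

Lemma Hon l : (l < r)%N -> onth js l = Some (jl l).
Proof. by move=> Hl; rewrite onthE (nth_map i). Qed.

Lemma Fsub l : (l <= r)%N -> submod M (F l).
Proof.
case: l => [|l] Hl; first by rewrite HF0; exact: submod0.
by case: (Hst (Hon Hl)).
Qed.

Lemma FHG l : (l < r)%N -> exists G, HG (F l.+1) (F l) (Delta s t k (jl l)) G.
Proof. by move=> Hl; case: (Hst (Hon Hl)) => _ _ [G HG']; exists G. Qed.

Lemma Fle l : (l < r)%N -> (F l <= F l.+1)%MS.
Proof. by move=> Hl; case: (Hst (Hon Hl)). Qed.

Lemma rkF_step l : (l < r)%N -> \rank (F l.+1) = (\rank (F l) + mdim (Delta s t k (jl l)))%N.
Proof. by move=> Hl; have [G HG'] := FHG Hl; apply: step_rank HG'. Qed.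

Lemma rkE_sum l v : (l <= r)%N ->
  \rank (F l *m E v) = (\sum_(x <- take l js) \rank (mE (Delta s t k x) v))%N.
Proof.
elim: l => [|l IH] Hl; first by rewrite HF0 mul0mx mxrank0 take0 big_nil.
have Hl' : (l < r)%N by exact: Hl.
have H1 := IH (ltnW Hl').
have [G HG'] := FHG Hl'.
have H2 := rank_E_step v (Fsub Hl') (Fsub (ltnW Hl')) HG'.
rewrite H2 H1 (take_nth i Hl') -cats1 big_cat big_seq1.
reflexivity.
Qed.

Lemma rkE_tot v : \rank (E v) = (\sum_(x <- js) \rank (mE (Delta s t k x) v))%N.
Proof.
rewrite -(take_size js) -rkE_sum //.
by rewrite (eqmxMr _ (eqmxP HFr)) mul1mx.
Qed.

Lemma dimY_ge : (count_mem i js + \rank Y <= n)%N.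
Proof.
set Q := (\sum_(a | t a == i) \rank (E (s a)))%N.
have H1 : (\rank (E i) + \rank Y <= n + Q)%N.
  rewrite -mxrank_sum_cap; apply: leq_add; first exact: rank_leq_col.
  apply: leq_trans (mxrankS cap_Ei_Y) _; apply: leq_trans (rank_sum_le _ _) _.
  apply: leq_sum => a _; rewrite {1}HA -mulmxA; exact: mxrankM_maxl.
have H2 : (count_mem i js + Q <= \rank (E i))%N.
  rewrite /Q (eq_bigr _ (fun a _ => rkE_tot (s a))) exchange_big /= rkE_tot count_sum.
  rewrite -big_split /=; apply: leq_sum => x _; exact: D1.
clearbody Q; nlia.
Qed.

Local Notation fY l := (\rank (F l :&: Y)%MS).
Local Notation fF l := (\rank (F l)).
Local Notation ac l := (count_mem i (take l js)).

Lemma fYF l : (fY l <= fF l)%N.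
Proof. exact: mxrankS (capmxSl _ _). Qed.

Lemma a_step l : (l < r)%N -> ac l.+1 = (ac l + (jl l == i))%N.
Proof. by move=> Hl; rewrite (take_nth i Hl) -cats1 count_cat /= addn0. Qed.

Lemma fY_nonI l : (l < r)%N -> jl l != i -> fY l.+1 = (fY l + mdim (Delta s t k (jl l)))%N.
Proof.
move=> Hl Hj; have [G HG'] := FHG Hl.
exact: step_rank (restr_HG Hj (Fsub Hl) HG').
Qed.

Lemma fY_I l : (l < r)%N -> (fY l <= fY l.+1)%N.
Proof. by move=> Hl; apply: mxrankS; apply: capmxS (Fle Hl) (submx_refl _). Qed.

Lemma fF_I l : (l < r)%N -> jl l = i -> fF l.+1 = (fF l + 1)%N.
Proof. by move=> Hl Hj; rewrite rkF_step // Hj Di_dim. Qed.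

Lemma step_ineq l : (l < r)%N -> (fF l.+1 + (ac l + fY l) <= fF l + (ac l.+1 + fY l.+1))%N.
Proof.
move=> Hl; rewrite a_step //; case: (eqVneq (jl l) i) => Hj.
  have H1 := fF_I Hl Hj; have H2 := fY_I Hl; rewrite addn1; nlia.
have H1 := fY_nonI Hl Hj; have H2 := rkF_step Hl; rewrite addn0; nlia.
Qed.

Lemma inv_le l : (l <= r)%N -> (fF l <= ac l + fY l)%N.
Proof.
elim: l => [|l IH] Hl; first by rewrite HF0 mxrank0.
have Hl' : (l < r)%N by exact: Hl.
have H1 := IH (ltnW Hl'); have H2 := step_ineq Hl'; nlia.
Qed.

Lemma g_mono m l : (l + m)%N = r -> (ac l + fY l - fF l <= ac r + fY r - fF r)%N.
Proof.
elim: m l => [|m IH] l Hlm; first by rewrite addn0 in Hlm; rewrite Hlm.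
have Hl : (l < r)%N by rewrite -Hlm; nlia.
have H1 := IH l.+1 (etrans (addSnnS l m) Hlm).
have H2 := step_ineq Hl; have H3 := inv_le (ltnW Hl); nlia.
Qed.

Lemma Fr_cap : fY r = \rank Y.
Proof.
apply/eqmx_rank/andP; split; first exact: capmxSr.
rewrite sub_capmx submx_refl andbT.
by move/andP: HFr => [_ H]; apply: submx_trans H; apply: submx1.
Qed.

Lemma Fr_rank : fF r = n.
Proof. by rewrite (eqmx_rank HFr) mxrank1. Qed.

Lemma dimY_eq : (\rank Y + count_mem i js)%N = n.
Proof.
have H1 := inv_le (leqnn r); have H2 := dimY_ge.
rewrite Fr_cap Fr_rank take_size in H1; nlia.
Qed.

Lemma eqall l : (l <= r)%N -> fF l = (ac l + fY l)%N.
Proof.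
move=> Hl; have H1 := inv_le Hl; have H2 := dimY_ge.
have H3 := g_mono (subnKC Hl).
rewrite Fr_cap Fr_rank take_size in H3; nlia.
Qed.

Lemma capY_I l : (l < r)%N -> jl l = i -> (F l.+1 :&: Y == F l :&: Y)%MS.
Proof.
move=> Hl Hj.
have Hsub : (F l :&: Y <= F l.+1 :&: Y)%MS by apply: capmxS (Fle Hl) (submx_refl _).
have Hrk : fY l.+1 = fY l.
  have H1 := eqall (ltnW Hl); have H2 := eqall Hl; have H3 := fF_I Hl Hj.
  have H4 := a_step Hl; rewrite Hj eqxx addn1 in H4; nlia.
have := mxrank_leqif_eq Hsub; rewrite Hrk => -[_ /esym].
rewrite eqxx => /andP[H1 H2]; exact/andP.
Qed.

Lemma FrY : (F r :&: Y == Y)%MS.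
Proof.
apply/andP; split; first exact: capmxSr.
rewrite sub_capmx submx_refl andbT.
by move/andP: HFr => [_ H]; apply: submx_trans H; apply: submx1.
Qed.

Lemma eqmx_trans_b m1 m2 m3 (X1 : 'M[k]_(m1, n)) (X2 : 'M_(m2, n)) (X3 : 'M_(m3, n)) :
  (X1 == X2)%MS -> (X2 == X3)%MS -> (X1 == X3)%MS.
Proof.
by move=> /andP[a b] /andP[c d]; apply/andP; split; [apply: submx_trans a c | apply: submx_trans d b].
Qed.

Lemma eqmx_sym_b m1 m2 (X1 : 'M[k]_(m1, n)) (X2 : 'M_(m2, n)) :
  (X1 == X2)%MS -> (X2 == X1)%MS.
Proof. by move=> /andP[a b]; apply/andP. Qed.

Lemma Yfilt l : (l <= r)%N -> dfilt s t M (F l :&: Y)%MS [seq x <- take l js | x != i].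
Proof.
elim: l => [|l IH] Hl.
  exists (fun _ => 0); rewrite take0; split => //.
    apply/andP; split; first exact: sub0mx.
    by rewrite HF0; exact: capmxSl.
  by move=> l0 j0; rewrite onth0n.
have Hl' : (l < r)%N by exact: Hl.
have [F' [H0 Hsz Hsteps]] := IH (ltnW Hl').
rewrite (take_nth i Hl') filter_rcons.
case: (eqVneq (jl l) i) => Hj /=.
  exists F'; split => //.
  exact: eqmx_trans_b Hsz (eqmx_sym_b (capY_I Hl' Hj)).
set s' := [seq x <- take l js | x != i] in Hsz Hsteps *.
clearbody s'.
exists (fun x => if x == (size s').+1 then (F l.+1 :&: Y)%MS else F' x); split.
- by rewrite /= H0.
- by rewrite size_rcons eqxx; apply/andP; split.
move=> l' j'; rewrite -cats1 onth_cat; case: ltnP => Hlm.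
  move=> Hon'; have [Hs1 Hs2 Hs3] := Hsteps l' j' Hon'.
  have N1 : (l' == (size s').+1) = false by apply: ltn_eqF; apply: leqW.
  have N2 : (l'.+1 == (size s').+1) = false by rewrite eqSS ltn_eqF.
  by rewrite N1 N2.
case/onth1P => Hd <-.
have El : l' = size s' by apply/eqP; rewrite eqn_leq -subn_eq0 Hd eqxx Hlm.
rewrite El eqxx; have -> : (size s' == (size s').+1) = false by rewrite ltn_eqF.
have [G HG'] := FHG Hl'.
have HG2 := restr_HG Hj (Fsub Hl') HG'.
split.
- exact: submod_cap (Fsub Hl') submod_Y.
- move/andP: Hsz => [Hsz1 _]; apply: submx_trans Hsz1 _.
  exact: capmxS (Fle Hl') (submx_refl _).
exists G; case: HG2 => a b c d e; split => //.
exact: eqmx_trans_b e (eqmx_sym_b Hsz).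
Qed.

Lemma Y_filtered : Delta_filtered s t M Y.
Proof.
exists [seq x <- js | x != i].
have := Yfilt (leqnn r); rewrite take_size => -[F' [H0 Hsz Hst']].
exists F'; split => //; exact: eqmx_trans_b Hsz FrY.
Qed.

End Filt.

End Mod.

Lemma exG (k : fieldType) n m (Yy : 'M[k]_n) : (\rank Yy + m = n)%N ->
  exists G : 'M[k]_(n, m), row_full G /\ (kermx G == Yy)%MS.
Proof.
move=> Hr.
set C := cokermx Yy.
have HK : (kermx C == Yy)%MS.
  apply/andP; split.
    by rewrite submxE; apply/eqP; apply/sub_kermxP; exact: submx_refl.
  by apply/sub_kermxP; apply/eqP; rewrite -submxE submx_refl.
have HrC : \rank C = m.
  have H1 := mxrank_ker C; rewrite -(eqmx_rank HK) in Hr.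
  have H2 := rank_leq_row C. nlia.
have HK2 : (kermx (col_base C) == kermx C)%MS.
  have HC := mulmx_base C.
  apply/andP; split; apply/sub_kermxP.
    have E0 : kermx (col_base C) *m col_base C = 0 := sub_kermxP (submx_refl _).
    by rewrite -[X in _ *m X]HC mulmxA E0 mul0mx.
  have /row_freeP [B HB] := row_base_free C.
  have E0 : kermx C *m C = 0 := sub_kermxP (submx_refl _).
  rewrite -[X in _ *m X]mulmx1 -HB (mulmxA (col_base C)) HC.
  by rewrite mulmxA E0 mul0mx.
have : forall r (G : 'M[k]_(n, r)), r = m -> row_full G -> (kermx G == Yy)%MS ->
    exists G' : 'M[k]_(n, m), row_full G' /\ (kermx G' == Yy)%MS.
  by move=> r G Er HG1 HG2; subst r; exists G.
move=> Hgen; apply: (Hgen _ (col_base C) HrC (col_base_full C)).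
move/andP: HK2 => [a b]; move/andP: HK => [c e]; apply/andP; split.
  exact: submx_trans a c.
exact: submx_trans e b.
Qed.

Unset Implicit Arguments.
Theorem mainTheorem11 (k : closedFieldType) (V Ar : finType) (s t : Ar -> V)
  (HQ : acyclic s t) (i : V) (Hsink : forall a : Ar, s a != i)
  (M : dmod V Ar k) (HM : is_dmod s t M)
  (js : seq V) (Hfilt : dfilt s t M 1%:M js)
  (d : nat) (Hd : count_mem i js = d) (Hdpos : (0 < d)%N) :
  exists Y : 'M[k]_(mdim M),
    [/\ submod M Y,
        subquot_iso M 1%:M Y (dpow (Delta s t k i) d),
        (forall Y' : 'M[k]_(mdim M), submod M Y' ->
            subquot_iso M 1%:M Y' (dpow (Delta s t k i) d) -> (Y' == Y)%MS)
      & Delta_filtered s t M Y].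
Proof.
case: Hfilt => F [HF0 HFr Hst].
have Hdim := dimY_eq HQ Hsink HM HF0 HFr Hst; rewrite Hd in Hdim.
have HNd := dpow_dim k t Hsink d.
have [G [HGf HGk]] : exists G : 'M[k]_(mdim M, mdim (dpow (Delta s t k i) d)),
    row_full G /\ (kermx G == Y t i M)%MS by apply: exG; rewrite HNd.
have HYK : (Y t i M <= kermx G)%MS by case/andP: HGk.
have HKY w : w != i -> mE M w *m G = 0.
  by move=> Hw; apply/sub_kermxP; apply: submx_trans (E_sub_Y t M Hw) HYK.
exists (Y t i M); split.
- exact (submod_Y Hsink HM).
- exists G; split.
  + move=> v; rewrite !mul1mx dpow_E // mul_mx_scalar.
    case: (eqVneq v i) => [->|Hv]; last by rewrite HKY // scale0r.
    rewrite scale1r.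
    have Hs0 : \sum_(w | w != i) mE M w *m G = 0 by apply: big1 => w Hw; rewrite HKY.
    by rewrite -{2}[G]mul1mx -(HEsum HM) mulmx_suml (bigD1 i) //= Hs0 addr0.
  + move=> a; rewrite !mul1mx dpow_A // mulmx0.
    by apply/sub_kermxP; apply: submx_trans (A_sub_Y i HM a) HYK.
  + move=> a; rewrite !mul1mx dpow_As // mulmx0.
    by apply/sub_kermxP; apply: submx_trans (As_sub_Y Hsink HM a) HYK.
  + by rewrite mul1mx.
  + by rewrite cap1mx.
- move=> Y' HY' [G' [HE' HA' _ Hf' Hk']].
  rewrite cap1mx in Hk'; rewrite mul1mx in Hf'.
  have HYK' : (Y t i M <= kermx G')%MS.
    apply: Y_sub_gen => [v Hv|a]; apply/sub_kermxP.
      by have := HE' v; rewrite !mul1mx dpow_E // mul_mx_scalar (negbTE Hv) scale0r.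
    by have := HA' a; rewrite !mul1mx dpow_A // mulmx0.
  have HYY' : (Y t i M <= Y')%MS by apply: submx_trans HYK' _; case/andP: Hk'.
  have Hr' : \rank Y' = (mdim M - d)%N.
    rewrite -(eqmx_rank Hk') mxrank_ker (eqP Hf') HNd //.
  have := mxrank_leqif_eq HYY'; rewrite Hr'.
  have -> : \rank (Y t i M) = (mdim M - d)%N by nlia.
  by case => _ /esym; rewrite eqxx => /andP[a b]; apply/andP.
- exact (Y_filtered HQ Hsink HM HF0 HFr Hst).
Qed.
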